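(* Let $\mathcal{C}$ be a covering of a finite set $E$ such that both $SH$ and $XH$ (defined below) are closure operators of matroids on $E$. Then $VH$ is also the closure operator of a matroid on $E$, and $\mathcal{I}_{SH}(\mathcal{C})\subseteq\mathcal{I}_{XH}(\mathcal{C})=\mathcal{I}_{VH}(\mathcal{C})$ and $\mathcal{L}_{SH}(M(\mathcal{C}))\subseteq\mathcal{L}_{XH}(M(\mathcal{C}))=\mathcal{L}_{VH}(M(\mathcal{C}))$.
   Context: A covering of $E$ is a family of nonempty subsets of $E$ with union $E$. For $x\in E$: $I(x)=\bigcup\{K\in\mathcal{C}:x\in K\}$ and $N(x)=\bigcap\{K\in\mathcal{C}:x\in K\}$. For $X\subseteq E$: $SH(X)=\bigcup\{K\in\mathcal{C}:K\cap X\neq\emptyset\}$, $XH(X)=\{x:N(x)\cap X\neq\emptyset\}$, $VH(X)=\bigcup\{N(x):N(x)\cap X\neq\emptyset\}$. When an operator $H\in\{SH,XH,VH\}$ is the closure operator of a matroid on $E$ (closure meaning $cl(X)=\{a:r(X\cup\{a\})=r(X)\}$), that matroid has independent sets $\mathcal{I}_H(\mathcal{C})=\{I\subseteq E:x\notin H(I-\{x\})\text{ for all }x\in I\}$, and $\mathcal{L}_H(M(\mathcal{C}))=\{X\subseteq E:H(X)=X\}$ denotes its set of closed sets ordered by inclusion. *)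

(* Defs.v *)
From mathcomp Require Import all_boot.
Set Implicit Arguments. Unset Strict Implicit. Unset Printing Implicit Defensive.

(* The finite ground set E is the whole finite type T. *)
Section Defs.
Variable T : finType.

Definition covering (C : {set {set T}}) : Prop :=
  (forall K, K \in C -> K != set0) /\ \bigcup_(K in C) K = [set: T].

Definition Iset (C : {set {set T}}) (x : T) : {set T} :=
  \bigcup_(K in C | x \in K) K.
Definition Nset (C : {set {set T}}) (x : T) : {set T} :=
  \bigcap_(K in C | x \in K) K.

Definition SH (C : {set {set T}}) (X : {set T}) : {set T} :=
  \bigcup_(K in C | K :&: X != set0) K.
Definition XH (C : {set {set T}}) (X : {set T}) : {set T} :=
  [set x | Nset C x :&: X != set0].
Definition VH (C : {set {set T}}) (X : {set T}) : {set T} :=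
  \bigcup_(x | Nset C x :&: X != set0) Nset C x.

Definition is_matroid (I : {set {set T}}) : Prop :=
  [/\ set0 \in I,
      (forall A B : {set T}, B \in I -> A \subset B -> A \in I) &
      (forall A B : {set T}, A \in I -> B \in I -> #|A| < #|B| ->
         exists2 x, x \in B :\: A & x |: A \in I)].

Definition mrank (I : {set {set T}}) (X : {set T}) : nat :=
  \max_(Y in I | Y \subset X) #|Y|.
Definition mclosure (I : {set {set T}}) (X : {set T}) : {set T} :=
  [set a | mrank I (a |: X) == mrank I X].

Definition is_matroid_closure (H : {set T} -> {set T}) : Prop :=
  exists2 I, is_matroid I & forall X, H X = mclosure I X.

Definition indep_of (H : {set T} -> {set T}) : {set {set T}} :=
  [set I : {set T} | [forall x in I, x \notin H (I :\ x)]].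
Definition closed_of (H : {set T} -> {set T}) : {set {set T}} :=
  [set X : {set T} | H X == X].

End Defs.

(* Main.v *)
From Stdlib Require Import FunctionalExtensionality.
Require Import Defs.
From mathcomp Require Import all_boot.

Section S.
Variable T : finType.
Implicit Types (C : {set {set T}}) (X : {set T}).

Lemma mrank_le I X : mrank I X <= #|X|.
Proof. apply/bigmax_leqP => Y /andP[_ sub]; exact: subset_leq_card. Qed.

Lemma Nself C x : x \in Nset C x.
Proof. by apply/bigcapP => K /andP[_ ->]. Qed.

Lemma Nsub C x y : y \in Nset C x -> Nset C y \subset Nset C x.
Proof.
move=> /bigcapP hy; apply/subsetP => z /bigcapP hz.
apply/bigcapP => K /andP[KC xK]; apply: hz; rewrite KC; exact: hy (introT andP (conj KC xK)).
Qed.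

Lemma XHsym C : is_matroid_closure (XH C) ->
  forall x y, y \in Nset C x -> x \in Nset C y.
Proof.
move=> [I _ hI] x y hy.
have r1 : forall z, mrank I [set z] = 1.
  move=> z.
  have : z \notin XH C set0 by rewrite inE setI0 eqxx.
  rewrite hI inE setU0.
  have r0 : mrank I set0 = 0 by apply/eqP; rewrite -leqn0 -(cards0 T) mrank_le.
  rewrite r0; have := mrank_le I [set z]; rewrite cards1.
  by case: (mrank I [set z]) => [|[|]].
have hx : x \in XH C [set y].
  rewrite inE; apply/set0Pn; exists y; by rewrite inE hy set11.
have : y \in XH C [set x].
  move: hx; rewrite !hI !inE r1.
  by rewrite r1 setUC.
rewrite inE => /set0Pn [w]; rewrite inE => /andP[wN]; rewrite inE => /eqP <-.
exact: wN.
Qed.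

Lemma VH_XH C : is_matroid_closure (XH C) -> forall X, VH C X = XH C X.
Proof.
move=> hM X; apply/setP => z; apply/idP/idP.
- move=> /bigcupP [x hx zx]; rewrite inE.
  have -> : Nset C z = Nset C x.
    apply/eqP; rewrite eqEsubset Nsub //.
    by apply: Nsub; apply: XHsym.
  by [].
- rewrite inE => hz; apply/bigcupP; exists z => //; exact: Nself.
Qed.

Lemma XH_SH C : covering C -> forall X, XH C X \subset SH C X.
Proof.
move=> [_ hcov] X; apply/subsetP => z; rewrite inE => /set0Pn [w].
rewrite inE => /andP [/bigcapP wN wX].
have : z \in \bigcup_(K in C) K by rewrite hcov inE.
move=> /bigcupP [K KC zK]; apply/bigcupP; exists K => //.
rewrite KC /=; apply/set0Pn; exists w; rewrite inE wX andbT.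
apply: wN; by rewrite KC zK.
Qed.

Lemma X_XH C X : X \subset XH C X.
Proof.
apply/subsetP => z zX; rewrite inE; apply/set0Pn; exists z.
by rewrite inE Nself zX.
Qed.

End S.

Theorem theorem12 (T : finType) (C : {set {set T}}) :
  covering C ->
  is_matroid_closure (SH C) -> is_matroid_closure (XH C) ->
  [/\ is_matroid_closure (VH C),
      indep_of (SH C) \subset indep_of (XH C),
      indep_of (XH C) = indep_of (VH C),
      closed_of (SH C) \subset closed_of (XH C) &
      closed_of (XH C) = closed_of (VH C)].
Proof.
move=> hcov _ hX.
have E : VH C = XH C by apply: functional_extensionality; exact: VH_XH.
rewrite E; split => //.
- apply/subsetP => I; rewrite !inE => /forallP h; apply/forallP => x.
  apply/implyP => xI; have := implyP (h x) xI; apply: contra.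
  by apply/subsetP; apply: XH_SH.
- apply/subsetP => X; rewrite !inE => /eqP h; apply/eqP/eqP.
  rewrite eqEsubset X_XH andbT -{2}h; exact: XH_SH.
Qed.
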